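(* Let $a>0$, $L>0$, $k>0$ and fix $t$. Let $\bar u$, $u(t,\cdot)$ be functions on $[0,L]$ with $u_x(t,\cdot),u_t(t,\cdot)\in L^2(0,L)$ such that $0\le \bar u+u\le \frac a2$ on $[0,L]$. Assume $k$ is large enough that $$M_1:=\min\Big\{\tfrac34 k a^2-a-1,\ k-1\Big\}>0,$$ and define $K_1=\frac{1+2L^2}{M_1}$ and $K_2=\max\{k a^2+a+1,\ k+1\}$. Let $$E_1(t)=\int_0^L k\Big[\big(a^2-(\bar u+u)^2\big)u_x^2+u_t^2\Big]-2\exp\Big(-\tfrac xL\Big)\Big[(\bar u+u)u_x^2+u_tu_x\Big]dx.$$ Then $$M_1\int_0^L(u_t^2+u_x^2)\,dx\le E_1(t)\le K_2\int_0^L(u_t^2+u_x^2)\,dx,$$ and $$\int_0^L\big(u_t^2+(1+2L^2)u_x^2\big)\,dx\le K_1E_1(t).$$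
   Context: Here $u_t,u_x$ denote the partial derivatives of $u(t,x)$ evaluated at the fixed time $t$. *)

(* Defs.v *)
From HB Require Import structures.
From mathcomp Require Import all_boot all_order all_algebra.
From mathcomp Require Import all_classical all_reals all_analysis.
Set Implicit Arguments. Unset Strict Implicit. Unset Printing Implicit Defensive.
Import Order.TTheory GRing.Theory Num.Theory numFieldNormedType.Exports.
Local Open Scope classical_set_scope.
Local Open Scope ring_scope.

Definition pdx {R : realType} (u : R -> R -> R) (t x : R) : R :=
  derive1 (fun y => u t y) x.
Definition pdt {R : realType} (u : R -> R -> R) (t x : R) : R :=
  derive1 (fun s => u s x) t.

Definition L2on {R : realType} (D : set R) (f : R -> R) : Prop :=
  measurable_fun D f /\
  (@lebesgue_measure R).-integrable D (fun x => ((f x) ^+ 2)%:E).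

Definition E1 {R : realType} (k L : R) (a : R) (ub : R -> R)
  (u : R -> R -> R) (t : R) : R :=
  Rintegral (@lebesgue_measure R) `[0, L]
    (fun x => k * ((a ^+ 2 - (ub x + u t x) ^+ 2) * (pdx u t x) ^+ 2
                   + (pdt u t x) ^+ 2)
              - 2 * expR (- (x / L)) *
                ((ub x + u t x) * (pdx u t x) ^+ 2 + pdt u t x * pdx u t x)).

(* Main.v *)
Require Import Defs.
From HB Require Import structures.
From mathcomp Require Import all_boot all_order all_algebra.
From mathcomp Require Import all_classical all_reals all_analysis.
From mathcomp Require Import lra.
Import Order.TTheory GRing.Theory Num.Theory numFieldNormedType.Exports.
Local Open Scope classical_set_scope.
Local Open Scope ring_scope.

Lemma pw (R : realType) (a k w p q e M1 K2 : R) :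
  0 < a -> 0 < k -> 0 <= w -> w <= a / 2 -> 0 < e -> e <= 1 ->
  M1 <= 3 / 4 * k * a ^+ 2 - a - 1 -> M1 <= k - 1 ->
  k * a ^+ 2 + a + 1 <= K2 -> k + 1 <= K2 ->
  M1 * (q ^+ 2 + p ^+ 2) <=
    k * ((a ^+ 2 - w ^+ 2) * p ^+ 2 + q ^+ 2) - 2 * e * (w * p ^+ 2 + q * p)
  /\ k * ((a ^+ 2 - w ^+ 2) * p ^+ 2 + q ^+ 2) - 2 * e * (w * p ^+ 2 + q * p)
     <= K2 * (q ^+ 2 + p ^+ 2).
Proof.
move=> a0 k0 w0 wa e0 e1 m1 m2 k1 k2.
have h1 : k * (a ^+ 2 - w ^+ 2) >= 3 / 4 * k * a ^+ 2.
  have : w ^+ 2 <= a ^+ 2 / 4 by nra.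
  nra.
have h2 : 2 * e * w <= a by nra.
have h3 : 0 <= 2 * e * w by nra.
have hp : 0 <= p ^+ 2 by nra.
have hq : 0 <= q ^+ 2 by nra.
have h4 : `|2 * e * (q * p)| <= q ^+ 2 + p ^+ 2.
  have : 2 * `|q * p| <= q ^+ 2 + p ^+ 2.
    rewrite normrM.
    have eq1 : `|q| ^+ 2 = q ^+ 2 by rewrite real_normK ?num_real.
    have eq2 : `|p| ^+ 2 = p ^+ 2 by rewrite real_normK ?num_real.
    have := sqr_ge0 (`|q| - `|p|); nra.
  rewrite !normrM (ger0_norm (ltW e0)) (ger0_norm (ler0n _ 2)) => H.
  have : 0 <= `|q| * `|p| by rewrite mulr_ge0.
  nra.
have h5 := ler_norm (2 * e * (q * p)).
have h6 : - (2 * e * (q * p)) <= `|2 * e * (q * p)| by rewrite -normrN ler_norm.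
have h7 : k * (a ^+ 2 - w ^+ 2) <= k * a ^+ 2 by nra.
split; nra.
Qed.

Theorem lemma1 (R : realType) (a L k t : R) (ub : R -> R) (u : R -> R -> R) :
  0 < a -> 0 < L -> 0 < k ->
  measurable_fun `[0, L] ub ->
  measurable_fun `[0, L] (u t) ->
  L2on `[0, L] (pdx u t) ->
  L2on `[0, L] (pdt u t) ->
  (forall x, x \in `[0, L] -> 0 <= ub x + u t x <= a / 2) ->
  let M1 := Num.min (3 / 4 * k * a ^+ 2 - a - 1) (k - 1) in
  0 < M1 ->
  let K1 := (1 + 2 * L ^+ 2) / M1 in
  let K2 := Num.max (k * a ^+ 2 + a + 1) (k + 1) in
  let I := Rintegral (@lebesgue_measure R) `[0, L]
             (fun x => (pdt u t x) ^+ 2 + (pdx u t x) ^+ 2) in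
  [/\ M1 * I <= E1 k L a ub u t,
      E1 k L a ub u t <= K2 * I &
      Rintegral (@lebesgue_measure R) `[0, L]
        (fun x => (pdt u t x) ^+ 2 + (1 + 2 * L ^+ 2) * (pdx u t x) ^+ 2)
        <= K1 * E1 k L a ub u t].
Proof.
move=> a0 L0 k0 mub mu [mp ip] [mq iq] hw M1 M10 K1 K2 I.
set D : set (measurableTypeR R) := `[0, L]%classic.
have mD : measurable D by apply: measurable_itv.
set F := fun x => k * ((a ^+ 2 - (ub x + u t x) ^+ 2) * (pdx u t x) ^+ 2
                   + (pdt u t x) ^+ 2)
              - 2 * expR (- (x / L)) *
                ((ub x + u t x) * (pdx u t x) ^+ 2 + pdt u t x * pdx u t x).
have EF : E1 k L a ub u t = Rintegral lebesgue_measure D F by [].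
have hM1a : M1 <= 3 / 4 * k * a ^+ 2 - a - 1 by rewrite /M1 ge_min lexx.
have hM1b : M1 <= k - 1 by rewrite /M1 ge_min lexx orbT.
have hK2a : k * a ^+ 2 + a + 1 <= K2 by rewrite /K2 le_max lexx.
have hK2b : k + 1 <= K2 by rewrite /K2 le_max lexx orbT.
have PW : forall x, D x ->
   M1 * ((pdt u t x) ^+ 2 + (pdx u t x) ^+ 2) <= F x /\
   F x <= K2 * ((pdt u t x) ^+ 2 + (pdx u t x) ^+ 2).
  move=> x Dx.
  have /andP[w0 wa] := hw x Dx.
  have : 0 <= x <= L by move: Dx; rewrite /D /= in_itv.
  move=> /andP[x0 xL].
  apply: pw => //; first exact: expR_gt0.
  rewrite expR_le1 oppr_le0; exact: divr_ge0 (ltW L0).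
have iQP : lebesgue_measure.-integrable D
    (EFin \o (fun x => (pdt u t x) ^+ 2 + (pdx u t x) ^+ 2)).
  have := integrableD mD iq ip.
  by congr (_.-integrable _ _); apply/funext => x.
have iK : forall c : R, lebesgue_measure.-integrable D
    (EFin \o (fun x => c * ((pdt u t x) ^+ 2 + (pdx u t x) ^+ 2))).
  move=> c; have := integrableZl mD c iQP.
  by congr (_.-integrable _ _); apply/funext => x.
have mF' : measurable_fun (`[0, L]%classic : set R) F.
  have mW : measurable_fun (`[0, L]%classic : set R) (fun x => ub x + u t x).
    exact: measurable_realfun.measurable_funD mub mu.
  rewrite /F; apply: measurable_realfun.measurable_funB.
    apply: measurable_realfun.measurable_funM; first exact: measurable_cst.
    apply: measurable_realfun.measurable_funD; last exact: measurable_realfun.measurable_funX.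
    apply: measurable_realfun.measurable_funM; last exact: measurable_realfun.measurable_funX.
    apply: measurable_realfun.measurable_funB; first exact: measurable_cst.
    exact: measurable_realfun.measurable_funX.
  apply: measurable_realfun.measurable_funM.
    apply: measurable_realfun.measurable_funM; first exact: measurable_cst.
    have mg : measurable_fun (`[0, L]%classic : set R) (fun x : R => - (x / L)).
      apply: measurable_realfun.measurable_funN.
      apply: measurable_realfun.measurable_funM; first exact: measurable_id.
      exact: measurable_cst.
    by apply: measurableT_comp; [exact: measurable_realfun.measurable_expR| exact: mg].
  apply: measurable_realfun.measurable_funD.
    exact: measurable_realfun.measurable_funM mW (measurable_realfun.measurable_funX 2 mp).
  exact: measurable_realfun.measurable_funM mq mp.
have mF : measurable_fun D F := mF'.
have iF : lebesgue_measure.-integrable D (EFin \o F).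
  apply: (le_integrable mD _ _ (iK K2)).
    by apply/measurable_realfun.measurable_EFinP.
  move=> x Dx /=; rewrite lee_fin.
  have [h1 h2] := PW x Dx.
  have hg : 0 <= M1 * ((pdt u t x) ^+ 2 + (pdx u t x) ^+ 2).
    by rewrite mulr_ge0 ?addr_ge0 ?sqr_ge0 // ltW.
  rewrite !ger0_norm //; [exact: le_trans hg (le_trans h1 h2)| exact: le_trans hg h1].
have H1 : M1 * I <= E1 k L a ub u t.
  rewrite EF /I -RintegralZl //.
  apply: le_Rintegral => // x Dx; exact: (PW x Dx).1.
split => //.
  rewrite EF /I -RintegralZl //.
  apply: le_Rintegral => // x Dx; exact: (PW x Dx).2.
have iL : lebesgue_measure.-integrable D
   (EFin \o (fun x => (pdt u t x) ^+ 2 + (1 + 2 * L ^+ 2) * (pdx u t x) ^+ 2)).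
  have := integrableD mD iq (integrableZl mD (1 + 2 * L ^+ 2) ip).
  by congr (_.-integrable _ _); apply/funext => x.
apply: (@le_trans _ _ ((1 + 2 * L ^+ 2) * I)).
  rewrite /I -RintegralZl //.
  apply: le_Rintegral => // x Dx.
  have := sqr_ge0 (pdt u t x); have := sqr_ge0 L; nra.
rewrite /K1 -mulrA ler_wpM2l //; first by have := sqr_ge0 L; lra.
by rewrite ler_pdivlMl.
Qed.
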